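(* Let $K$ be an algebraically closed field of characteristic $2$ and let $X=\{a_1\sigma_1^4+a_2\sigma_1^2\sigma_2+a_3\sigma_1\sigma_3+a_4\sigma_4+\beta\sigma_2^2=0\}\subset\mathbb{P}^3_K$ be normal. Then $\mathrm{Sing}(X)$ contains the $\mathfrak{S}_4$-orbit of a point $(0,1,x_3,x_4)$ with $x_3,x_4\neq0$ if and only if this orbit is either (i) the $\mathfrak{S}_4$-orbit (of $12$ points) of a point $(0,1,1,z)$ with $z\neq0,1$, which happens if and only if $a_3=a_2z$, $a_4=a_2z^2$, $\beta=a_1z^4+a_2z^2(1+z)$; or (ii) the $\mathfrak{S}_4$-orbit (of $4$ points) of $(0,1,1,1)$, which happens if and only if $a_2=a_4$ and $\beta=a_1+a_2+a_3$. In case (i) necessarily $a_2\neq0$.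
   Context: $\sigma_i$ is the $i$-th elementary symmetric polynomial in $x_1,\dots,x_4$; $\mathfrak{S}_4$ permutes coordinates. Normal means irreducible with finitely many singular points. *)

(* Defs.v *)
From HB Require Import structures.
From mathcomp Require Import all_boot all_order all_algebra.
From mathcomp Require Import fingroup perm.
From mathcomp Require Import mpoly.
Set Implicit Arguments. Unset Strict Implicit. Unset Printing Implicit Defensive.
Import GRing.Theory.
Local Open Scope ring_scope.

Section Defs.
Variable K : closedFieldType.

Definition sig (i : nat) : {mpoly K[4]} := mesym 4 K i.

Definition Fq (a1 a2 a3 a4 b : K) : {mpoly K[4]} :=
  a1 *: sig 1 ^+ 4 + a2 *: (sig 1 ^+ 2 * sig 2) + a3 *: (sig 1 * sig 3)
  + a4 *: sig 4 + b *: sig 2 ^+ 2.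

Definition pt (x1 x2 x3 x4 : K) : 'I_4 -> K :=
  fun i => nth 0 [:: x1; x2; x3; x4] i.

Definition nonzero_vec (v : 'I_4 -> K) : Prop := exists i, v i != 0.

Definition is_sing (F : {mpoly K[4]}) (v : 'I_4 -> K) : Prop :=
  nonzero_vec v /\ F.@[v] = 0 /\ forall i : 'I_4, (mderiv i F).@[v] = 0.

Definition proj_eq (v w : 'I_4 -> K) : Prop :=
  exists2 l : K, l != 0 & forall i, v i = l * w i.

Definition in_orbit (v w : 'I_4 -> K) : Prop :=
  exists s : 'S_4, proj_eq v (fun i => w (s i)).

Definition orbit_in_sing (F : {mpoly K[4]}) (w : 'I_4 -> K) : Prop :=
  forall v, in_orbit v w -> is_sing F v.

Definition same_orbit (v w : 'I_4 -> K) : Prop :=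
  forall u, in_orbit u v <-> in_orbit u w.

Definition orbit_card (w : 'I_4 -> K) (k : nat) : Prop :=
  exists s : seq ('I_4 -> K),
    size s = k /\ (forall i, (i < k)%N -> in_orbit (nth (fun _ => 0) s i) w)
    /\ (forall i j, (i < k)%N -> (j < k)%N -> i <> j ->
          ~ proj_eq (nth (fun _ => 0) s i) (nth (fun _ => 0) s j))
    /\ (forall u, in_orbit u w ->
          exists2 i, (i < k)%N & proj_eq u (nth (fun _ => 0) s i)).

Definition mirreducible (F : {mpoly K[4]}) : Prop :=
  F \isn't a GRing.unit /\ F != 0 /\
  forall G H : {mpoly K[4]}, F = G * H -> G \is a GRing.unit \/ H \is a GRing.unit.

Definition finitely_many_sing (F : {mpoly K[4]}) : Prop :=
  exists s : seq ('I_4 -> K), forall v, is_sing F v ->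
    exists2 i, (i < size s)%N & proj_eq v (nth (fun _ => 0) s i).

Definition normal_surface (F : {mpoly K[4]}) : Prop :=
  mirreducible F /\ finitely_many_sing F.

End Defs.

(* Main.v *)
Require Import Defs.
From HB Require Import structures.
From mathcomp Require Import all_boot all_order all_algebra.
From mathcomp Require Import fingroup perm.
From mathcomp Require Import mpoly.
From mathcomp Require Import ring.
Import GRing.Theory.
Local Open Scope ring_scope.

Section S.
Variable K : closedFieldType.
Definition o0 : 'I_4 := @Ordinal 4 0 isT.
Definition o1 : 'I_4 := @Ordinal 4 1 isT.
Definition o2 : 'I_4 := @Ordinal 4 2 isT.
Definition o3 : 'I_4 := @Ordinal 4 3 isT.
Definition X0 : {mpoly K[4]} := 'X_o0.
Definition X1 : {mpoly K[4]} := 'X_o1.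
Definition X2 : {mpoly K[4]} := 'X_o2.
Definition X3 : {mpoly K[4]} := 'X_o3.

Lemma ordE (i : 'I_4) : i = o0 \/ i = o1 \/ i = o2 \/ i = o3.
Proof.
case: i => [[|[|[|[|m]]]] Hm].
- by left; apply: val_inj.
- by right; left; apply: val_inj.
- by right; right; left; apply: val_inj.
- by right; right; right; apply: val_inj.
- by [].
Qed.

Lemma XoE (i : 'I_4) : 'X_i = (if val i == 0%N then X0 else if val i == 1%N then X1
   else if val i == 2%N then X2 else X3 : {mpoly K[4]}).
Proof. by case: (ordE i) => [->|[->|[->|->]]]. Qed.

Lemma s1E : sig K 1 = X0 + X1 + X2 + X3.
Proof.
rewrite /sig mesym1E !big_ord_recr big_ord0 /= !XoE /=. ring.
Qed.

Lemma s4E : sig K 4 = X0 * X1 * X2 * X3.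
Proof.
rewrite /sig mesymnnE !big_ord_recr big_ord0 /= !XoE /=. ring.
Qed.

Lemma s2E : sig K 2 = X0*X1 + X0*X2 + X0*X3 + X1*X2 + X1*X3 + X2*X3.
Proof.
rewrite /sig (mesymSS K 3 1) (mesymSS K 2 1) !mesymnnE !mesym1E.
rewrite !big_ord_recr !big_ord0.
rewrite !(mwidenD, mwidenM, mwidenX, mnmwiden1, mwiden0, mwiden1).
rewrite !XoE /=. ring.
Qed.

Lemma s3E : sig K 3 = X0*X1*X2 + X0*X1*X3 + X0*X2*X3 + X1*X2*X3.
Proof.
rewrite /sig (mesymSS K 3 2) (mesymSS K 2 1) !mesymnnE !mesym1E.
rewrite !big_ord_recr !big_ord0.
rewrite !(mwidenD, mwidenM, mwidenX, mnmwiden1, mwiden0, mwiden1).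
rewrite !XoE /=. ring.
Qed.

Lemma dX (i j : 'I_4) : mderiv i ('X_j : {mpoly K[4]}) = ((j == i)%:R).
Proof.
rewrite mderivX mnm1E; case: eqP => [->|_]; last by rewrite scale0r.
have -> : (U_(i) - U_(i) = 0)%MM by apply/mnmP => k; rewrite mnmBE mnm0E subnn.
by rewrite mpolyX0 scale1r.
Qed.

Definition S1 (v : 'I_4 -> K) := v o0 + v o1 + v o2 + v o3.
Definition S2 (v : 'I_4 -> K) := v o0 * v o1 + v o0 * v o2 + v o0 * v o3 + v o1 * v o2 + v o1 * v o3 + v o2 * v o3.
Definition S3 (v : 'I_4 -> K) := v o0 * v o1 * v o2 + v o0 * v o1 * v o3 + v o0 * v o2 * v o3 + v o1 * v o2 * v o3.
Definition S4 (v : 'I_4 -> K) := v o0 * v o1 * v o2 * v o3.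

Lemma sigv k v : (sig K k).@[v] = \sum_(h : {set 'I_4} | #|h| == k) \prod_(i in h) v i.
Proof.
rewrite /sig /mesym rmorph_sum; apply: eq_bigr => h _.
rewrite rmorph_prod; apply: eq_bigr => i _; exact: mevalXU.
Qed.

Lemma sig_hom k (l : K) (s : 'S_4) v :
  (sig K k).@[fun i => l * v (s i)] = l ^+ k * (sig K k).@[v].
Proof.
rewrite !sigv mulr_sumr.
rewrite (reindex (fun h : {set 'I_4} => (s^-1)%g @: h)) /=; last first.
  exists (fun h : {set 'I_4} => s @: h) => h _; rewrite -imset_comp;
  by rewrite (eq_imset (g:=id)) ?imset_id // => x /=; rewrite ?permK ?permKV.
apply: eq_big => [h|h].
  by rewrite card_imset //; apply: perm_inj.
rewrite card_imset; last exact: perm_inj.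
move=> /eqP hk.
rewrite big_imset /=; last by move=> x y _ _; apply: perm_inj.
rewrite big_split /= prodr_const hk; congr (_ * _).
by apply: eq_bigr => i _; rewrite permKV.
Qed.

Definition sg k (v : 'I_4 -> K) := (sig K k).@[v].
Lemma S1E v : S1 v = sg 1 v.
Proof. by rewrite /sg s1E /X0 /X1 /X2 /X3 !(mevalD, mevalXU). Qed.
Lemma S2E v : S2 v = sg 2 v.
Proof. by rewrite /sg s2E /X0 /X1 /X2 /X3 !(mevalD, mevalM, mevalXU). Qed.
Lemma S3E v : S3 v = sg 3 v.
Proof. by rewrite /sg s3E /X0 /X1 /X2 /X3 !(mevalD, mevalM, mevalXU). Qed.
Lemma S4E v : S4 v = sg 4 v.
Proof. by rewrite /sg s4E /X0 /X1 /X2 /X3 !(mevalD, mevalM, mevalXU). Qed.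

Lemma tpE (x y z : 'I_4) : tperm x y z = if z == x then y else if z == y then x else z.
Proof. by case: tpermP => [->|->|/eqP/negbTE-> /eqP/negbTE->]; rewrite ?eqxx //; case: eqP. Qed.

Variables a1 a2 a3 a4 b : K.
Definition Fv (s1 s2 s3 s4 : K) := a1 * s1^+4 + a2 * (s1^+2 * s2) + a3 * (s1 * s3) + a4 * s4 + b * s2^+2.
Definition Dv (s1 s2 s3 t : K) :=
  a1 * (4 * s1^+3) + a2 * (2*s1*s2 + s1^+2*(s1 - t)) + a3*(s3 + s1*(s2 - t*(s1 - t)))
  + a4*(s3 - t*(s2 - t*(s1-t))) + b*(2*s2*(s1 - t)).

Lemma e4 (x : {mpoly K[4]}) : x^+4 = x*x*x*x. Proof. ring. Qed.
Lemma e2 (x : {mpoly K[4]}) : x^+2 = x*x. Proof. ring. Qed.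

Lemma evalF v : (Fq a1 a2 a3 a4 b).@[v] = Fv (S1 v) (S2 v) (S3 v) (S4 v).
Proof.
rewrite /Fq s1E s2E s3E s4E /X0 /X1 /X2 /X3.
rewrite !(mevalD, mevalM, mevalZ, mevalXU, rmorphXn) /Fv /S1 /S2 /S3 /S4.
ring.
Qed.

Lemma evalD i v : (mderiv i (Fq a1 a2 a3 a4 b)).@[v] = Dv (S1 v) (S2 v) (S3 v) (v i).
Proof.
rewrite /Fq s1E s2E s3E s4E !e4 !e2.
rewrite !(mderivD, mderivZ, mderivM) /X0 /X1 /X2 /X3 !dX.
rewrite !(mevalD, mevalM, mevalZ, mevalXU, rmorph_nat) /Dv /S1 /S2 /S3 /S4.
by case: (ordE i) => [->|[->|[->|->]]] /=; ring.
Qed.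

Let F := Fq a1 a2 a3 a4 b.

Lemma is_sing_ext v w : v =1 w -> is_sing F v -> is_sing F w.
Proof.
move=> e [[i hi] [h1 h2]]; split; first by exists i; rewrite -e.
by split; [rewrite -(meval_eq _ e) | move=> j; rewrite -(meval_eq _ e)].
Qed.

Lemma sing_perm w (l : K) (s : 'S_4) : l != 0 -> is_sing F w ->
  is_sing F (fun i => l * w (s i)).
Proof.
move=> hl [[i hi] [h1 h2]]; split.
  by exists ((s^-1)%g i); rewrite permKV mulf_neq0.
split.
  move: h1; rewrite /F !evalF !S1E !S2E !S3E !S4E /sg !sig_hom => h1.
  have -> : forall x1 x2 x3 x4, Fv (l ^+ 1 * x1) (l ^+ 2 * x2) (l ^+ 3 * x3) (l ^+ 4 * x4)
     = l ^+ 4 * Fv x1 x2 x3 x4 by move=> *; rewrite /Fv; ring.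
  by rewrite h1 mulr0.
move=> j; have := h2 (s j).
rewrite /F !evalD !S1E !S2E !S3E /sg !sig_hom => h.
have -> : forall x1 x2 x3 t, Dv (l ^+ 1 * x1) (l ^+ 2 * x2) (l ^+ 3 * x3) (l * t)
     = l ^+ 3 * Dv x1 x2 x3 t by move=> *; rewrite /Dv; ring.
by rewrite h mulr0.
Qed.

Lemma orbit_singP w : orbit_in_sing F w <-> is_sing F w.
Proof.
split.
  move=> h; apply: h; exists 1%g; exists 1; first exact: oner_neq0.
  by move=> i; rewrite perm1 mul1r.
move=> h v [s [l hl hv]]; apply: (@is_sing_ext (fun i => l * w (s i))).
  by move=> i; rewrite hv.
exact: sing_perm.
Qed.

Lemma orbit_move v w : (exists s : 'S_4, exists2 l : K, l != 0 & forall i, w i = l * v (s i)) ->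
  same_orbit v w.
Proof.
move=> [s [l hl hw]] u; split.
  move=> [t [m hm hu]]; exists (t * s^-1)%g; exists (m / l).
    by rewrite mulf_neq0 // invr_eq0.
  by move=> i; rewrite hu permM hw permKV mulrA divfK.
move=> [t [m hm hu]]; exists (t * s)%g; exists (m * l); first by rewrite mulf_neq0.
by move=> i; rewrite hu permM hw mulrA.
Qed.

Lemma sing_pt x y : is_sing F (pt 0 1 x y) <->
  [/\ Fv (S1 (pt 0 1 x y)) (S2 (pt 0 1 x y)) (S3 (pt 0 1 x y)) (S4 (pt 0 1 x y)) = 0,
      Dv (S1 (pt 0 1 x y)) (S2 (pt 0 1 x y)) (S3 (pt 0 1 x y)) 0 = 0,
      Dv (S1 (pt 0 1 x y)) (S2 (pt 0 1 x y)) (S3 (pt 0 1 x y)) 1 = 0,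
      Dv (S1 (pt 0 1 x y)) (S2 (pt 0 1 x y)) (S3 (pt 0 1 x y)) x = 0 &
      Dv (S1 (pt 0 1 x y)) (S2 (pt 0 1 x y)) (S3 (pt 0 1 x y)) y = 0].
Proof.
split.
  move=> [_ [h1 h2]]; move: h1; rewrite /F evalF => h1.
  have := h2 o0; have := h2 o1; have := h2 o2; have := h2 o3.
  by rewrite /F !evalD /=.
move=> [h1 d0 d1 dx dy]; split; first by exists o1; rewrite /= oner_neq0.
split; first by rewrite /F evalF.
by move=> i; rewrite /F evalD; case: (ordE i) => [->|[->|[->|->]]].
Qed.

Section Char2.
Variable two0 : (2 : K) = 0.

Lemma eq2 (R A B : K) : A = B + 2 * R -> A = B.
Proof. by rewrite two0 mul0r addr0. Qed.

Lemma c2 (u v : K) : u + v = 0 -> u = v.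
Proof. move=> h; have -> : u = (u + v) + v by apply: (eq2 (- v)); ring. by rewrite h add0r. Qed.

Lemma n1 (y : K) : y != 1 -> 1 + y != 0.
Proof.
apply: contra => /eqP h; apply/eqP; have -> : y = (1 + y) + 1 by apply: (eq2 (-1)); ring.
by rewrite h add0r.
Qed.

Definition D2 (s1 s2 s3 t : K) :=
  a2 * (s1^+2*(s1 - t)) + a3*(s3 + s1*(s2 - t*(s1 - t))) + a4*(s3 - t*(s2 - t*(s1 - t))).

Lemma Dv2 s1 s2 s3 t : Dv s1 s2 s3 t = D2 s1 s2 s3 t.
Proof.
apply: (eq2 (a1*(2*s1^+3) + a2*(s1*s2) + b*(s2*(s1-t)))); rewrite /Dv /D2; ring.
Qed.

Lemma classA (hn : ~(a3 = 0 /\ a4 = 0)) x y : x != 0 -> y != 0 -> is_sing F (pt 0 1 x y) ->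
  (exists z : K, [/\ z != 0, z != 1 & same_orbit (pt 0 1 x y) (pt 0 1 1 z)])
  \/ same_orbit (pt 0 1 x y) (pt 0 1 1 (1 : K)).
Proof.
move=> hx hy /sing_pt [hF d0 d1 dxx dyy].
case: (eqVneq x 1) => [ex | nx1].
  rewrite ex; case: (eqVneq y 1) => [ey | ny1].
    by right; rewrite ey => u; split.
  by left; exists y; split => // u; split.
case: (eqVneq y 1) => [ey | ny1].
  left; exists x; split => //; rewrite ey; apply: orbit_move.
  exists (tperm o2 o3); exists 1; first exact: oner_neq0.
  by move=> i; case: (ordE i) => [->|[->|[->|->]]]; rewrite tpE /= mul1r.
case: (eqVneq x y) => [exy | nxy].
  left; exists x^-1; split; first by rewrite invr_eq0.
    by rewrite invr_eq1.
  rewrite -exy; apply: orbit_move.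
  exists (tperm o1 o3); exists x^-1; first by rewrite invr_eq0.
  by move=> i; case: (ordE i) => [->|[->|[->|->]]]; rewrite tpE /= ?mulr0 ?mulr1 ?mulVf.
exfalso.
have ex : (1+y)*(a2*(1+x+y)^+2 + a3*y) = 0.
  by rewrite -dxx Dv2 /D2 /S1 /S2 /S3 /pt /=; apply: (eq2 (-(a3*x*y))); ring.
have ey : (1+x)*(a2*(1+x+y)^+2 + a3*x) = 0.
  by rewrite -dyy Dv2 /D2 /S1 /S2 /S3 /pt /=; apply: (eq2 (-(a3*x*y))); ring.
have e0 : (a2*(1+x+y)^+2)*(1+x+y) + a4*(x*y) + a3*(x*y + (1+x+y)*(x+y+x*y)) = 0.
  by rewrite -d0 Dv2 /D2 /S1 /S2 /S3 /pt /=; ring.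
move/eqP: ex; rewrite mulf_eq0 (negbTE (@n1 _ ny1)) /= => /eqP A.
move/eqP: ey; rewrite mulf_eq0 (negbTE (@n1 _ nx1)) /= => /eqP B.
have : a3 * (y - x) = 0.
  have -> : a3 * (y - x) = (a2*(1+x+y)^+2 + a3*y) - (a2*(1+x+y)^+2 + a3*x) by ring.
  by rewrite A B subr0.
move/eqP; rewrite mulf_eq0 subr_eq0 => /orP [/eqP h3 | /eqP eyx]; last first.
  by move: nxy; rewrite eyx eqxx.
move: A; rewrite h3 mul0r addr0 => A.
move: e0; rewrite A h3 !mul0r add0r addr0 => /eqP.
rewrite !mulf_eq0 (negbTE hx) (negbTE hy) !orbF => /eqP h4.
by apply: hn.
Qed.

Lemma singB z : z != 0 -> z != 1 -> (is_sing F (pt 0 1 1 z) <->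
   [/\ a3 = a2 * z, a4 = a2 * z ^+ 2 & b = a1 * z ^+ 4 + a2 * z ^+ 2 * (1 + z)]).
Proof.
move=> hz0 hz1.
have hS1 : S1 (pt 0 1 1 z) = z by rewrite /S1 /pt /=; apply: (eq2 1); ring.
have hS2 : S2 (pt 0 1 1 z) = 1 by rewrite /S2 /pt /=; apply: (eq2 z); ring.
have hS3 : S3 (pt 0 1 1 z) = z by rewrite /S3 /pt /=; ring.
have hS4 : S4 (pt 0 1 1 z) = 0 by rewrite /S4 /pt /=; ring.
have hF : Fv z 1 z 0 = a1 * z^+4 + a2 * z^+2 + a3 * z^+2 + b by rewrite /Fv; ring.
have hD0 : D2 z 1 z 0 = z * (a2 * z^+2 + a4) by rewrite /D2; apply: (eq2 (a3 * z)); ring.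
have hD1 : D2 z 1 z 1 = z * (z + 1) * (a2 * z + a3).
  rewrite /D2; apply: (eq2 (-(a2 * z^+2) + a3*(z - z^+2) + a4*(z - 1))); ring.
have hDz : D2 z 1 z z = 0 by rewrite /D2; apply: (eq2 (a3 * z)); ring.
have nz1 : z + 1 != 0 by rewrite addrC; apply: n1.
rewrite sing_pt hS1 hS2 hS3 hS4 !Dv2 hF hD0 hD1 hDz; split.
  move=> [e1 /eqP e2 /eqP e3 _ _].
  move: e2; rewrite mulf_eq0 (negbTE hz0) /= => /eqP/c2 h4.
  move: e3; rewrite !mulf_eq0 (negbTE hz0) (negbTE nz1) /= => /eqP/c2 h3.
  split; [by rewrite h3 | by rewrite h4 |].
  by move: e1; rewrite -h3 => /c2 <-; ring.
move=> [h3 h4 hb]; split => //.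
- by rewrite h3 hb; apply: (eq2 (a1 * z^+4 + a2 * z^+2 + a2 * z ^+ 3)); ring.
- by rewrite h4; apply: (eq2 (z * (a2 * z^+2))); ring.
- by rewrite h3; apply: (eq2 (z * (z + 1) * (a2 * z))); ring.
- by rewrite h3; apply: (eq2 (z * (z + 1) * (a2 * z))); ring.
Qed.

Lemma singC : is_sing F (pt 0 1 1 1) <-> a2 = a4 /\ b = a1 + a2 + a3.
Proof.
have hS1 : S1 (pt 0 1 1 1) = 1 by rewrite /S1 /pt /=; apply: (eq2 1); ring.
have hS2 : S2 (pt 0 1 1 1) = 1 by rewrite /S2 /pt /=; apply: (eq2 1); ring.
have hS3 : S3 (pt 0 1 1 1) = 1 by rewrite /S3 /pt /=; ring.
have hS4 : S4 (pt 0 1 1 1) = 0 by rewrite /S4 /pt /=; ring.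
have hF : Fv 1 1 1 0 = (a1 + a2 + a3) + b by rewrite /Fv; ring.
have hD0 : D2 1 1 1 0 = a2 + a4 by rewrite /D2; apply: (eq2 a3); ring.
have hD1 : D2 1 1 1 1 = 0 by rewrite /D2; apply: (eq2 a3); ring.
rewrite sing_pt hS1 hS2 hS3 hS4 !Dv2 hF hD0 hD1; split.
  by move=> [/c2 e1 /c2 e2 _ _ _]; split; [|rewrite e1].
move=> [h2 hb]; split => //.
- by rewrite hb; apply: (eq2 (a1 + a2 + a3)); ring.
- by rewrite h2; apply: (eq2 a4); ring.
Qed.

Definition g (z : K) (p q : 'I_4) : 'I_4 -> K := fun i => if i == p then 0 else if i == q then z else 1.
Definition g1 (p : 'I_4) : 'I_4 -> K := fun i => if i == p then 0 else 1.

Lemma wsE z (s : 'S_4) i : pt 0 1 1 z (s i) = g z ((s^-1)%g o0) ((s^-1)%g o3) i.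
Proof.
rewrite /g -[i == _](inj_eq (@perm_inj _ s)) permKV -[i == _](inj_eq (@perm_inj _ s)) permKV.
by case: (ordE (s i)) => [->|[->|[->|->]]]; rewrite /pt /=.
Qed.

Lemma wsE1 (s : 'S_4) i : pt 0 1 1 1 (s i) = g1 ((s^-1)%g o0) i.
Proof.
rewrite /g1 -[i == _](inj_eq (@perm_inj _ s)) permKV.
by case: (ordE (s i)) => [->|[->|[->|->]]]; rewrite /pt /=.
Qed.

Lemma ex_perm (p q : 'I_4) : p != q -> exists s : 'S_4, s p = o0 /\ s q = o3.
Proof.
move=> hpq.
have hq' : tperm p o0 q != o0.
  by rewrite -[X in _ != X](tpermL p o0) (inj_eq (@perm_inj _ _)) eq_sym.
exists (tperm p o0 * tperm (tperm p o0 q) o3)%g; split; rewrite permM.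
  by rewrite tpermL (tpermD hq').
by rewrite tpermL.
Qed.

Lemma in_orbit_g z p q : p != q -> Defs.in_orbit (g z p q) (pt 0 1 1 z).
Proof.
move=> hpq; have [s [hp hq]] := ex_perm _ _ hpq.
exists s; exists 1; first exact: oner_neq0.
move=> i; rewrite mul1r wsE.
have -> : (s^-1)%g o0 = p by rewrite -hp permK.
by have -> : (s^-1)%g o3 = q by rewrite -hq permK.
Qed.

Lemma in_orbit_g1 p : Defs.in_orbit (g1 p) (pt 0 1 1 1).
Proof.
exists (tperm p o0); exists 1; first exact: oner_neq0.
move=> i; rewrite mul1r wsE1.
by have -> : ((tperm p o0)^-1)%g o0 = p by rewrite tpermV tpermR.
Qed.

Lemma g_inj z : z != 0 -> z != 1 -> forall p q p' q', p != q -> p' != q' ->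
  proj_eq (g z p q) (g z p' q') -> p = p' /\ q = q'.
Proof.
move=> hz0 hz1 p q p' q' hpq hpq' [l hl h].
have ep : p' = p.
  move: (h p'); rewrite /g eqxx mulr0; case: eqP => // _; case: eqP => _ /eqP.
  - by rewrite (negbTE hz0).
  - by rewrite oner_eq0.
subst p'; split => //.
case: (eqVneq q' q) => // hq'; exfalso.
have hqp : (q == p) = false by apply/negbTE; rewrite eq_sym.
have hq'p : (q' == p) = false by apply/negbTE; rewrite eq_sym.
have hqq' : (q == q') = false by apply/negbTE; rewrite eq_sym.
move: (h q) (h q'); rewrite /g hqp hq'p !eqxx hqq' (negbTE hq') mulr1 => ez.
rewrite -ez => e1.
have : (z + 1) ^+ 2 = 0.
  rewrite (_ : (z+1)^+2 = z*z + 2*z + 1); last by ring.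
  by rewrite -e1; apply: (eq2 (1 + z)); ring.
move/eqP; rewrite expf_eq0 /= => /eqP /c2 ez1.
by move: hz1; rewrite ez1 eqxx.
Qed.

Lemma g1_inj p p' : proj_eq (g1 p) (g1 p') -> p = p'.
Proof.
move=> [l hl h]; move: (h p'); rewrite /g1 eqxx mulr0.
by case: eqP => // _ /eqP; rewrite oner_eq0.
Qed.

Definition L12 : seq ('I_4 * 'I_4) := [:: (o0,o1);(o0,o2);(o0,o3);(o1,o0);(o1,o2);(o1,o3);
  (o2,o0);(o2,o1);(o2,o3);(o3,o0);(o3,o1);(o3,o2)].

Lemma card12 (z : K) : z != 0 -> z != 1 -> orbit_card (pt 0 1 1 z) 12.
Proof.
move=> hz0 hz1.
have /allP HL : all (fun pq : 'I_4 * 'I_4 => pq.1 != pq.2) L12 by [].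
have UL : uniq L12 by [].
have CL : forall p q : 'I_4, p != q -> (p, q) \in L12.
  by move=> p q; case: (ordE p) => [->|[->|[->|->]]]; case: (ordE q) => [->|[->|[->|->]]].
exists [seq g z pq.1 pq.2 | pq <- L12]; split; first by [].
split.
  move=> i hi; rewrite (nth_map (o0,o0)) //.
  apply: in_orbit_g; exact: (HL _ (@mem_nth _ (o0,o0) L12 i hi)).
split.
  move=> i j hi hj hij hpe; rewrite !(nth_map (o0,o0)) // in hpe.
  have [e1 e2] := @g_inj z hz0 hz1 _ _ _ _ (HL _ (@mem_nth _ (o0,o0) L12 i hi)) (HL _ (@mem_nth _ (o0,o0) L12 j hj)) hpe.
  apply: hij; apply/eqP; rewrite -(@nth_uniq _ (o0,o0) L12 i j hi hj UL); apply/eqP.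
  by move: e1 e2; case: (nth _ L12 i) => ? ?; case: (nth _ L12 j) => ? ? /= -> ->.
move=> u [s [l hl hu]].
have hpq : (s^-1)%g o0 != (s^-1)%g o3 by rewrite (inj_eq (@perm_inj _ _)).
have hin := CL _ _ hpq.
exists (index ((s^-1)%g o0, (s^-1)%g o3) L12); first by rewrite index_mem.
by exists l => // i; rewrite hu (nth_map (o0,o0)) ?index_mem // nth_index // wsE.
Qed.

Definition L4 : seq 'I_4 := [:: o0; o1; o2; o3].

Lemma card4 : orbit_card (pt 0 1 1 (1 : K)) 4.
Proof.
have UL : uniq L4 by [].
have CL : forall p : 'I_4, p \in L4.
  by move=> p; case: (ordE p) => [->|[->|[->|->]]].
exists [seq g1 p | p <- L4]; split; first by [].
split.
  by move=> i hi; rewrite (nth_map o0) //; apply: in_orbit_g1.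
split.
  move=> i j hi hj hij hpe; rewrite !(nth_map o0) // in hpe.
  have e := @g1_inj _ _ hpe.
  by apply: hij; apply/eqP; rewrite -(@nth_uniq _ o0 L4 i j hi hj UL) e.
move=> u [s [l hl hu]].
exists (index ((s^-1)%g o0) L4); first by rewrite index_mem.
by exists l => // i; rewrite hu (nth_map o0) ?index_mem // nth_index // wsE1.
Qed.
End Char2.

Lemma quadfac (c1 c2 c3 : K) : exists p q r t, [/\ p*r = c1, p*t + q*r = c2 & q*t = c3].
Proof.
case: (eqVneq c1 0) => [->|h1].
  by exists 0, 1, c2, c3; split; ring.
have [x hx] := @solve_monicpoly K 2 (nth 0 [:: -c3/c1; -c2/c1]) isT.
move: hx; rewrite !big_ord_recr big_ord0 /= expr0 expr1 => hx.
exists c1, (-c1*x), 1, (c2/c1 + x); split.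
- by rewrite mulr1.
- by field.
- have -> : -c1 * x * (c2 / c1 + x) = - c1 * x^+2 - c2 * x by field.
  by rewrite hx; field.
Qed.

Lemma noA : normal_surface F -> a3 = 0 -> a4 = 0 -> False.
Proof.
move=> [[hnu [hnz hirr]] _] h3 h4.
have [p [q [r [t [hpr hpt hqt]]]]] := quadfac a1 a2 b.
pose G := p *: sig K 1 ^+ 2 + q *: sig K 2.
pose H := r *: sig K 1 ^+ 2 + t *: sig K 2.
have hF : F = G * H.
  rewrite /F /Fq h3 h4 !scale0r !addr0 /G /H -!mul_mpolyC -hpr -hpt -hqt.
  rewrite !rmorphD !rmorphM /=; ring.
have G0 : forall p q : K, (p *: sig K 1 ^+ 2 + q *: sig K 2).@[fun _ => 0] = 0.
  move=> p' q'; rewrite s1E s2E /X0 /X1 /X2 /X3.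
  rewrite !(mevalD, mevalM, mevalZ, mevalXU, rmorphXn) /=; ring.
case: (hirr G H hF) => hu.
  case/unitrP: hu => y [hy _]; move/(congr1 (meval (fun _ : 'I_4 => (0 : K)))): hy.
  by rewrite mevalM meval1 /G G0 mulr0 => /eqP; rewrite eq_sym oner_eq0.
case/unitrP: hu => y [hy _]; move/(congr1 (meval (fun _ : 'I_4 => (0 : K)))): hy.
by rewrite mevalM meval1 /H G0 mulr0 => /eqP; rewrite eq_sym oner_eq0.
Qed.

End S.

Theorem lemma4p5 (K : closedFieldType) (a1 a2 a3 a4 b : K) :
  (2 \in [pchar K])%N ->
  normal_surface (Fq a1 a2 a3 a4 b) ->
  (forall x3 x4 : K, x3 != 0 -> x4 != 0 ->
     orbit_in_sing (Fq a1 a2 a3 a4 b) (pt 0 1 x3 x4) ->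
     (exists z : K, [/\ z != 0, z != 1 & same_orbit (pt 0 1 x3 x4) (pt 0 1 1 z)])
     \/ same_orbit (pt 0 1 x3 x4) (pt 0 1 1 (1 : K)))
  /\ (forall z : K, z != 0 -> z != 1 ->
     orbit_card (pt 0 1 1 z) 12 /\
     (orbit_in_sing (Fq a1 a2 a3 a4 b) (pt 0 1 1 z) <->
      [/\ a3 = a2 * z, a4 = a2 * z ^+ 2 & b = a1 * z ^+ 4 + a2 * z ^+ 2 * (1 + z)]))
  /\ (orbit_card (pt 0 1 1 (1 : K)) 4 /\
     (orbit_in_sing (Fq a1 a2 a3 a4 b) (pt 0 1 1 (1 : K)) <->
      a2 = a4 /\ b = a1 + a2 + a3))
  /\ (forall z : K, z != 0 -> z != 1 ->
     orbit_in_sing (Fq a1 a2 a3 a4 b) (pt 0 1 1 z) -> a2 != 0).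
Proof.
move=> hc hn.
have two0 : (2 : K) = 0 := pcharf0 hc.
have hA : ~ (a3 = 0 /\ a4 = 0) by move=> [h3 h4]; exact: (@noA K a1 a2 a3 a4 b hn h3 h4).
split.
  move=> x3 x4 h3 h4 /orbit_singP hs.
  exact: (@classA K a1 a2 a3 a4 b two0 hA x3 x4 h3 h4 hs).
split.
  move=> z hz0 hz1; split; first exact: (@card12 K two0 z hz0 hz1).
  rewrite orbit_singP; exact: (@singB K a1 a2 a3 a4 b two0 z hz0 hz1).
split.
  split; first exact: (@card4 K).
  rewrite orbit_singP; exact: (@singC K a1 a2 a3 a4 b two0).
move=> z hz0 hz1 /orbit_singP /(@singB K a1 a2 a3 a4 b two0 z hz0 hz1) [h3 h4 hb].
apply/eqP => h2; apply: hA; rewrite h3 h4 h2; split; ring.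
Qed.
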